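(* Let $R$ be a relational type, possibly containing the type variable $X$ free, with $X\in^+ R$, and let $\gamma$ be an environment defined on the free type variables of $\mathrm{Rec}\,X.R$. Then for all terms $t_1,t_2$: $t_1\,\llbracket \mathrm{Rec}\,X.R \simeq [\mathrm{Rec}\,X.R/X]R\rrbracket_\gamma\,t_2$.
   Context: Terms are those of the pure untyped $\lambda$-calculus, up to $\alpha$-equivalence; $=_{\beta\eta}$ is $\beta\eta$-convertibility. Relational types: $R ::= X \mid R\to R' \mid \forall X.R \mid R^{\cup} \mid R\cdot R' \mid t$ (last form: promotion of a term); $[R/X]R'$ is capture-avoiding substitution. A relation $r$ on terms is $\beta\eta$-closed if $t_1\,r\,t_2$, $t_1'=_{\beta\eta}t_1$, $t_2'=_{\beta\eta}t_2$ imply $t_1'\,r\,t_2'$; $\mathcal{R}$ is the set of such relations; environments $\gamma$ map finitely many type variables to $\mathcal{R}$. Interpretation: $\llbracket X\rrbracket_\gamma=\gamma(X)$; $t\,\llbracket R\to R'\rrbracket_\gamma\,t'$ iff for all $a,a'$ with $a\,\llbracket R\rrbracket_\gamma\,a'$, $t\,a\,\llbracket R'\rrbracket_\gamma\,t'\,a'$; $\llbracket \forall X.R\rrbracket_\gamma=\bigcap_{r\in\mathcal{R}}\llbracket R\rrbracket_{\gamma[X\mapsto r]}$; $t\,\llbracket R^\cup\rrbracket_\gamma\,t'$ iff $t'\,\llbracket R\rrbracket_\gamma\,t$; $t\,\llbracket R\cdot R'\rrbracket_\gamma\,t'$ iff $\exists t''$ with $t\,\llbracket R\rrbracket_\gamma\,t''$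 and $t''\,\llbracket R'\rrbracket_\gamma\,t'$; $\llbracket \hat t\rrbracket_\gamma=\{(t,t')\mid \hat t\,t=_{\beta\eta}t'\}$. Abbreviations: $I:=\lambda x.x$, $K:=\lambda x.\lambda y.x$; $t\bullet R:=t\cdot R\cdot t^\cup$; $R\subseteq R':=(K\,I)\bullet(R\to R')$; $R\Rightarrow R':=K\bullet(R\to R')$; $R\simeq R':=(R\subseteq R')\cdot(R'\subseteq R)$; $\mathrm{Rec}\,X.R := \forall X.(R\subseteq X)\Rightarrow X$. With polarities $p\in\{+,-\}$ and $\bar p$ the other, $X\in^pR$ is defined by: $X\in^+X$; $X\in^pY$ for type variables $Y\ne X$; $X\in^p(R\to R')$ iff $X\in^{\bar p}R$ and $X\in^pR'$; $X\in^p\forall Y.R$ iff $X\in^pR$; $X\in^p(R\cdot R')$ iff $X\in^pR$ and $X\in^pR'$; $X\in^pR^\cup$ iff $X\in^pR$; $X\in^p t$ for every promoted term. *)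

(* Defs.v *)
From Stdlib Require Import Arith Bool.

(** * Pure untyped lambda-terms (de Bruijn indices: alpha-equivalence is syntactic equality) *)
Inductive term : Type :=
| var : nat -> term
| app : term -> term -> term
| lam : term -> term.

Fixpoint lift (k : nat) (t : term) : term :=
  match t with
  | var n => if n <? k then var n else var (S n)
  | app t1 t2 => app (lift k t1) (lift k t2)
  | lam t1 => lam (lift (S k) t1)
  end.

Fixpoint subst (k : nat) (u : term) (t : term) : term :=
  match t with
  | var n => if n =? k then u else if k <? n then var (pred n) else var n
  | app t1 t2 => app (subst k u t1) (subst k u t2)
  | lam t1 => lam (subst (S k) (lift 0 u) t1)
  end.

Inductive step : term -> term -> Prop :=
| step_beta : forall t u, step (app (lam t) u) (subst 0 u t)
| step_eta : forall t, step (lam (app (lift 0 t) (var 0))) t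
| step_appl : forall t t' u, step t t' -> step (app t u) (app t' u)
| step_appr : forall t u u', step u u' -> step (app t u) (app t u')
| step_lam : forall t t', step t t' -> step (lam t) (lam t').

Inductive conv : term -> term -> Prop :=
| conv_step : forall t u, step t u -> conv t u
| conv_refl : forall t, conv t t
| conv_sym : forall t u, conv t u -> conv u t
| conv_trans : forall t u v, conv t u -> conv u v -> conv t v.

Notation "t =be u" := (conv t u) (at level 70).

Definition tI : term := lam (var 0).
Definition tK : term := lam (lam (var 1)).

Definition rel := term -> term -> Prop.

Definition bclosed (r : rel) : Prop :=
  forall t1 t2 t1' t2', r t1 t2 -> t1' =be t1 -> t2' =be t2 -> r t1' t2'.

(** * Relational types; type variables are de Bruijn indices, [All] binds index 0 *)
Inductive rtype : Type :=
| TVar : nat -> rtype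
| Arr : rtype -> rtype -> rtype
| All : rtype -> rtype
| Conv : rtype -> rtype
| Comp : rtype -> rtype -> rtype
| Prom : term -> rtype.

Fixpoint tlift (k : nat) (R : rtype) : rtype :=
  match R with
  | TVar n => if n <? k then TVar n else TVar (S n)
  | Arr R1 R2 => Arr (tlift k R1) (tlift k R2)
  | All R1 => All (tlift (S k) R1)
  | Conv R1 => Conv (tlift k R1)
  | Comp R1 R2 => Comp (tlift k R1) (tlift k R2)
  | Prom t => Prom t
  end.

Fixpoint tsubst (k : nat) (S : rtype) (R : rtype) : rtype :=
  match R with
  | TVar n => if n =? k then S else if k <? n then TVar (pred n) else TVar n
  | Arr R1 R2 => Arr (tsubst k S R1) (tsubst k S R2)
  | All R1 => All (tsubst (Datatypes.S k) (tlift 0 S) R1)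
  | Conv R1 => Conv (tsubst k S R1)
  | Comp R1 R2 => Comp (tsubst k S R1) (tsubst k S R2)
  | Prom t => Prom t
  end.

Definition env := nat -> rel.
Definition env_cons (r : rel) (g : env) : env :=
  fun n => match n with 0 => r | Datatypes.S m => g m end.

Fixpoint interp (g : env) (R : rtype) : rel :=
  match R with
  | TVar n => g n
  | Arr R1 R2 => fun t t' => forall a a', interp g R1 a a' -> interp g R2 (app t a) (app t' a')
  | All R1 => fun t t' => forall r : rel, bclosed r -> interp (env_cons r g) R1 t t'
  | Conv R1 => fun t t' => interp g R1 t' t
  | Comp R1 R2 => fun t t' => exists t'', interp g R1 t t'' /\ interp g R2 t'' t'
  | Prom u => fun t t' => app u t =be t'
  end.

Definition Dot (t : term) (R : rtype) : rtype := Comp (Comp (Prom t) R) (Conv (Prom t)).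
Definition Subset (R R' : rtype) : rtype := Dot (app tK tI) (Arr R R').
Definition Imp (R R' : rtype) : rtype := Dot tK (Arr R R').
Definition Equiv (R R' : rtype) : rtype := Comp (Subset R R') (Subset R' R).
(** Rec X.R, where X is index 0 of the body R *)
Definition Rec (R : rtype) : rtype := All (Imp (Subset R (TVar 0)) (TVar 0)).

(** * Polarity: [occ k p R] is "X in^p R" for X the variable with index k
      (p = true is +, p = false is -) *)
Fixpoint occ (k : nat) (p : bool) (R : rtype) : Prop :=
  match R with
  | TVar n => if n =? k then p = true else True
  | Arr R1 R2 => occ k (negb p) R1 /\ occ k p R2
  | All R1 => occ (Datatypes.S k) p R1
  | Conv R1 => occ k p R1
  | Comp R1 R2 => occ k p R1 /\ occ k p R2
  | Prom _ => True
  end.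

(* Main.v *)
Require Import Defs.
From Stdlib Require Import Arith Bool Lia.

Lemma conv_app_l : forall t t' a, t =be t' -> app t a =be app t' a.
Proof.
  intros t t' a H; induction H.
  - apply conv_step; apply step_appl; auto.
  - apply conv_refl.
  - apply conv_sym; auto.
  - eapply conv_trans; eauto.
Qed.

Lemma conv_app_r : forall t t' a, t =be t' -> app a t =be app a t'.
Proof.
  intros t t' a H; induction H.
  - apply conv_step; apply step_appr; auto.
  - apply conv_refl.
  - apply conv_sym; auto.
  - eapply conv_trans; eauto.
Qed.

Lemma subst_lift : forall t k u, subst k u (lift k t) = t.
Proof.
  induction t; intros k u; simpl.
  - destruct (n <? k) eqn:E.
    + apply Nat.ltb_lt in E. cbn [subst].
      destruct (n =? k) eqn:E1; [apply Nat.eqb_eq in E1; lia|].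
      destruct (k <? n) eqn:E2; [apply Nat.ltb_lt in E2; lia|]. reflexivity.
    + apply Nat.ltb_ge in E. cbn [subst].
      destruct (S n =? k) eqn:E1; [apply Nat.eqb_eq in E1; lia|].
      destruct (k <? S n) eqn:E2; [reflexivity|apply Nat.ltb_ge in E2; lia].
  - rewrite IHt1, IHt2; reflexivity.
  - rewrite IHt; reflexivity.
Qed.

Lemma K_beta : forall t a, app (app tK t) a =be t.
Proof.
  intros t a. eapply conv_trans.
  - apply conv_app_l. apply conv_step. apply step_beta.
  - simpl. eapply conv_trans. apply conv_step. apply step_beta.
    rewrite subst_lift. apply conv_refl.
Qed.

Lemma KI_beta : forall a x, app (app (app tK tI) a) x =be x.
Proof.
  intros a x. eapply conv_trans.
  - apply conv_app_l. apply K_beta.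
  - apply conv_step. apply step_beta.
Qed.

Lemma interp_closed : forall R g, (forall n, bclosed (g n)) -> bclosed (interp g R).
Proof.
  induction R; intros g Hg; simpl; unfold bclosed; intros t1 t2 t1' t2' H H1 H2.
  - eapply Hg; eauto.
  - intros a a' Ha. eapply (IHR2 g Hg). apply H; eauto.
    apply conv_app_l; auto. apply conv_app_l; auto.
  - intros r Hr. eapply IHR. 2: apply H; auto. 2,3: eauto.
    intros [|n]; simpl; auto.
  - eapply IHR; eauto.
  - destruct H as [t'' [Ha Hb]]. exists t''. split.
    eapply IHR1; eauto. apply conv_refl.
    eapply IHR2; eauto. apply conv_refl.
  - eapply conv_trans. apply conv_app_r. eauto.
    eapply conv_trans. eauto. apply conv_sym; auto.
Qed.

Definition env_eq (g g' : env) := forall n t t', g n t t' <-> g' n t t'.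

Lemma interp_ext : forall R g g', env_eq g g' -> forall t t', interp g R t t' <-> interp g' R t t'.
Proof.
  induction R; intros g g' E; simpl; intros x y.
  - apply E.
  - split; intros H a a' Ha; apply (IHR2 g g' E); apply H; apply (IHR1 g g' E); auto.
  - assert (forall r, env_eq (env_cons r g) (env_cons r g')).
    { intros r [|n]; simpl; intros; try tauto; apply E. }
    split; intros Hx r Hr; specialize (Hx r Hr); apply (IHR _ _ (H r)); auto.
  - apply IHR; auto.
  - split; intros [u [H1 H2]]; exists u; split;
      (apply (IHR1 _ _ E) + apply (IHR2 _ _ E)); auto.
  - tauto.
Qed.

Fixpoint insert (k : nat) (r : rel) (g : env) : env :=
  match k with
  | 0 => env_cons r g
  | S k' => env_cons (g 0) (insert k' r (fun n => g (S n)))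
  end.

Lemma insert_lt : forall k r g n, n < k -> insert k r g n = g n.
Proof.
  induction k; intros r g n H; [lia|]. destruct n; simpl; auto.
  rewrite IHk; auto; lia.
Qed.

Lemma insert_eq : forall k r g, insert k r g k = r.
Proof. induction k; intros; simpl; auto. Qed.

Lemma insert_ge : forall k r g n, k <= n -> insert k r g (S n) = g n.
Proof.
  induction k; intros r g n H; simpl; auto. destruct n; [lia|].
  simpl. rewrite IHk; auto; lia.
Qed.

Lemma insert_ext : forall k X Y g, (forall t t', X t t' <-> Y t t') -> env_eq (insert k X g) (insert k Y g).
Proof.
  induction k; intros X Y g H [|n]; simpl; intros; try tauto; auto.
  apply IHk; auto.
Qed.

Lemma interp_lift : forall T0 k r g t t', interp (insert k r g) (tlift k T0) t t' <-> interp g T0 t t'.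
Proof.
  induction T0 as [n|S1 IHS1 S2 IHS2|S1 IHS|S1 IHS|S1 IHS1 S2 IHS2|u]; intros k r g; simpl; intros x y.
  - destruct (n <? k) eqn:E.
    + apply Nat.ltb_lt in E. simpl. rewrite insert_lt; auto. tauto.
    + apply Nat.ltb_ge in E. simpl. rewrite insert_ge; auto. tauto.
  - split; intros H a a' Ha.
    + apply (proj1 (IHS2 k r g _ _)); apply H; apply (proj2 (IHS1 k r g _ _)); auto.
    + apply (proj2 (IHS2 k r g _ _)); apply H; apply (proj1 (IHS1 k r g _ _)); auto.
  - split; intros H r' Hr; specialize (H r' Hr).
    + apply (proj1 (IHS (S k) r (env_cons r' g) _ _)); auto.
    + apply (proj2 (IHS (S k) r (env_cons r' g) _ _)); auto.
  - apply IHS.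
  - split; intros [u [H1 H2]]; exists u; split.
    + apply (proj1 (IHS1 k r g _ _)); auto.
    + apply (proj1 (IHS2 k r g _ _)); auto.
    + apply (proj2 (IHS1 k r g _ _)); auto.
    + apply (proj2 (IHS2 k r g _ _)); auto.
  - tauto.
Qed.

Lemma interp_subst : forall R k S g t t',
  interp g (tsubst k S R) t t' <-> interp (insert k (interp g S) g) R t t'.
Proof.
  induction R; intros k S0 g; simpl; intros x y.
  - destruct (n =? k) eqn:E1.
    + apply Nat.eqb_eq in E1; subst. rewrite insert_eq. tauto.
    + apply Nat.eqb_neq in E1. destruct (k <? n) eqn:E2.
      * apply Nat.ltb_lt in E2. destruct n; [lia|]. simpl. rewrite insert_ge by lia. tauto.
      * apply Nat.ltb_ge in E2. simpl. rewrite insert_lt by lia. tauto.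
  - split; intros H a a' Ha.
    + apply (proj1 (IHR2 k S0 g _ _)); apply H; apply (proj2 (IHR1 k S0 g _ _)); auto.
    + apply (proj2 (IHR2 k S0 g _ _)); apply H; apply (proj1 (IHR1 k S0 g _ _)); auto.
  - assert (HE : forall r, env_eq (insert (S k) (interp (env_cons r g) (tlift 0 S0)) (env_cons r g))
                                  (env_cons r (insert k (interp g S0) g))).
    { intros r. change (env_eq (env_cons r (insert k (interp (env_cons r g) (tlift 0 S0)) g))
                                  (env_cons r (insert k (interp g S0) g))).
      intros [|n]; simpl; intros; [tauto|].
      apply insert_ext. intros a b. apply (interp_lift S0 0 r g). }
    split; intros H r Hr; specialize (H r Hr).
    + apply (interp_ext _ _ _ (HE r)). apply (proj1 (IHR (S k) _ _ _ _)). auto.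
    + apply (proj2 (IHR (S k) _ _ _ _)). apply (interp_ext _ _ _ (HE r)). auto.
  - apply IHR.
  - split; intros [u [H1 H2]]; exists u; split.
    + apply (proj1 (IHR1 k S0 g _ _)); auto.
    + apply (proj1 (IHR2 k S0 g _ _)); auto.
    + apply (proj2 (IHR1 k S0 g _ _)); auto.
    + apply (proj2 (IHR2 k S0 g _ _)); auto.
  - tauto.
Qed.

Definition sub (r r' : rel) := forall t t', r t t' -> r' t t'.

Lemma mono : forall R k p g1 g2, occ k p R ->
  (forall n, n <> k -> forall t t', g1 n t t' <-> g2 n t t') ->
  sub (g1 k) (g2 k) ->
  (p = true -> sub (interp g1 R) (interp g2 R)) /\ (p = false -> sub (interp g2 R) (interp g1 R)).
Proof.
  induction R; intros k p g1 g2 Ho Hag Hs; simpl in *.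
  - destruct (n =? k) eqn:E.
    + apply Nat.eqb_eq in E; subst. split; intros Hp; [exact Hs| congruence].
    + apply Nat.eqb_neq in E. split; intros _ t t'; apply Hag; auto.
  - destruct Ho as [Ho1 Ho2].
    destruct (IHR1 k (negb p) g1 g2 Ho1 Hag Hs) as [A1 B1].
    destruct (IHR2 k p g1 g2 Ho2 Hag Hs) as [A2 B2].
    split; intros Hp t t' H a a' Ha; subst; simpl in *.
    + apply A2; auto. apply H. apply B1; auto.
    + apply B2; auto. apply H. apply A1; auto.
  - assert (HH : forall r, (forall n, n <> S k -> forall t t', env_cons r g1 n t t' <-> env_cons r g2 n t t')).
    { intros r [|n] Hn; simpl; [tauto|]. apply Hag; lia. }
    split; intros Hp t t' H r Hr; specialize (H r Hr);
      destruct (IHR (S k) p (env_cons r g1) (env_cons r g2) Ho (HH r) Hs) as [A B]; [apply A|apply B]; auto.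
  - destruct (IHR k p g1 g2 Ho Hag Hs) as [A B].
    split; intros Hp t t' H; [apply A|apply B]; auto.
  - destruct Ho as [Ho1 Ho2].
    destruct (IHR1 k p g1 g2 Ho1 Hag Hs) as [A1 B1].
    destruct (IHR2 k p g1 g2 Ho2 Hag Hs) as [A2 B2].
    split; intros Hp t t' [u [H1 H2]]; exists u; split; [apply A1|apply A2|apply B1|apply B2]; auto.
  - split; intros _ x y H; auto.
Qed.

Lemma Subset_iff : forall g A B a a', bclosed (interp g A) -> bclosed (interp g B) ->
  (interp g (Subset A B) a a' <-> sub (interp g A) (interp g B)).
Proof.
  intros g A B a a' CA CB; simpl. split.
  - intros [u [[v [Hv Hvu]] Hu]] x y Hxy.
    specialize (Hvu x y Hxy).
    eapply CB. exact Hvu.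
    + eapply conv_trans. apply conv_sym. apply KI_beta with (a := a).
      apply conv_app_l; auto.
    + eapply conv_trans. apply conv_sym. apply KI_beta with (a := a').
      apply conv_app_l; auto.
  - intros H. exists (app (app tK tI) a'). split; [|apply conv_refl].
    exists (app (app tK tI) a). split; [apply conv_refl|].
    intros x y Hxy. eapply CB. apply H. exact Hxy. apply KI_beta. apply KI_beta.
Qed.

Lemma Imp_iff : forall g A B t t', bclosed (interp g B) ->
  (interp g (Imp A B) t t' <-> forall a a', interp g A a a' -> interp g B t t').
Proof.
  intros g A B t t' CB; simpl. split.
  - intros [u [[v [Hv Hvu]] Hu]] x y Hxy.
    specialize (Hvu x y Hxy).
    eapply CB. exact Hvu.
    + eapply conv_trans. apply conv_sym. apply K_beta with (a := x).
      apply conv_app_l; auto.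
    + eapply conv_trans. apply conv_sym. apply K_beta with (a := y).
      apply conv_app_l; auto.
  - intros H. exists (app tK t'). split; [|apply conv_refl].
    exists (app tK t). split; [apply conv_refl|].
    intros x y Hxy. eapply CB. eapply H. exact Hxy. apply K_beta. apply K_beta.
Qed.

Theorem mainTheorem3 (R : rtype) (g : env) :
  (forall n, bclosed (g n)) ->
  occ 0 true R ->
  forall t1 t2 : term, interp g (Equiv (Rec R) (tsubst 0 (Rec R) R)) t1 t2.
Proof.
  intros Hg Ho t1 t2.
  set (mu := interp g (Rec R)).
  set (F := fun r => interp (env_cons r g) R).
  assert (Hcons : forall r, bclosed r -> forall n, bclosed (env_cons r g n)).
  { intros r Hr [|n]; simpl; auto. }
  assert (Cmu : bclosed mu) by (apply interp_closed; auto).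
  assert (CF : forall r, bclosed r -> bclosed (F r)).
  { intros r Hr. apply interp_closed. auto. }
  assert (muI : forall t t', mu t t' <-> forall r, bclosed r -> sub (F r) r -> r t t').
  { intros t t'. unfold mu. change (interp g (Rec R) t t') with (forall r, bclosed r -> interp (env_cons r g) (Imp (Subset R (TVar 0)) (TVar 0)) t t'). split.
    - intros H r Hr Hs. specialize (H r Hr).
      pose proof (proj1 (Imp_iff (env_cons r g) (Subset R (TVar 0)) (TVar 0) t t' Hr) H) as H'.
      apply (H' t t). apply (proj2 (Subset_iff (env_cons r g) R (TVar 0) t t (CF r Hr) Hr)). exact Hs.
    - intros H r Hr. apply (proj2 (Imp_iff (env_cons r g) (Subset R (TVar 0)) (TVar 0) t t' Hr)).
      intros a a' Ha. apply H; auto.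
      exact (proj1 (Subset_iff (env_cons r g) R (TVar 0) a a' (CF r Hr) Hr) Ha). }
  assert (M : forall r1 r2, sub r1 r2 -> sub (F r1) (F r2)).
  { intros r1 r2 Hs.
    destruct (mono R 0 true (env_cons r1 g) (env_cons r2 g) Ho) as [A _]; auto.
    intros [|n] Hn; simpl; [lia|tauto]. }
  assert (A1 : sub (F mu) mu).
  { intros t t' H. apply muI. intros r Hr Hs. apply Hs.
    apply (M mu r); auto. intros a a' Ha. apply (proj1 (muI a a') Ha); auto. }
  assert (A2 : sub mu (F mu)).
  { intros t t' H. apply (proj1 (muI t t') H). apply CF; auto. apply M. auto. }
  assert (EB : forall t t', interp g (tsubst 0 (Rec R) R) t t' <-> F mu t t').
  { intros t t'. rewrite interp_subst. simpl. tauto. }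
  assert (CB : bclosed (interp g (tsubst 0 (Rec R) R))) by (apply interp_closed; auto).
  exists t1. split.
  - apply Subset_iff; auto. intros t t' H. apply EB. apply A2. exact H.
  - apply Subset_iff; auto. intros t t' H. apply A1. apply EB. exact H.
Qed.
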